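(* Let $q\ge3$, $G\in\mathbb G^q$, $S=\Psi(G)$, and $c\in\{1,\dots,q\}$. If every connected component of $S_{\hat c}$ is a tree, then every connected component of the graph obtained from $G_{\hat 0}$ by deleting all color-$c$ edges (the $c$-residues of $G_{\hat 0}$) is a melonic graph with color set $\{1,\dots,q\}\setminus\{c\}$.
   Context: Fix an integer $q\ge 2$. A $(q+1)$-edge-colored graph (colored graph) is a finite connected graph, multiple edges allowed and no loops, whose edges carry colors in $\{0,1,\dots,q\}$ such that every vertex is incident to exactly one edge of each color. It is rooted if one color-0 edge is distinguished and oriented; it is bipartite if its vertices can be colored black and white so that every edge joins a black and a white vertex, with the convention that the origin of the root edge is black. $\mathbb G^q$ denotes the set of rooted bipartite colored graphs. $G_{\hat 0}$ denotes the graph obtained from $G$ by deleting all color-0 edges. Constellations: given $G\in\mathbb G^q$, its constellation $S=\Psi(G)$ is obtained as follows: orient every edge from its black to its white endpoint; contract every color-0 edge into a single vertex, called a white vertex of $S$. For each $i\in\{1,\dots,q\}$ the color-$i$ edges now form directed cycles; for each such cycle, passing through white vertices $w_1,\dots,w_p$ in this cyclic order, add a new vertex of color $i$ joined by one color-$i$ edge to each $w_k$, equip the new vertex with the cyclic order $(w_1,\dots,w_p)$ of its incident edges, and delete the original color-$i$ edges of the cycle. For $c\in\{1,\dots,q\}$, $S_{\hat c}$ is the graph obtained from $S$ by deleting all vertices of color $c$ and all edges of color $c$. Melonic graphs: for a color set $A$ with $|A|=k\ge2$, a melonic graph with colors $A$ is a graph obtained from the graph with two vertices joined by $k$ edges of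 all colors of $A$ by finitely many insertions, where an insertion picks an edge $\{u,v\}$ of some color $a\in A$, deletes it, adds two new vertices $x,y$ joined by $k-1$ edges of the colors $A\setminus\{a\}$, and adds color-$a$ edges $\{u,x\}$ and $\{y,v\}$. *)

(* Defs.v *)
From mathcomp Require Import all_boot.
Set Implicit Arguments. Unset Strict Implicit. Unset Printing Implicit Defensive.

(* A (q+1)-edge-colored graph on the finite vertex type V is encoded by, for each
   color i, the involution s i : V -> V sending a vertex to the other endpoint of
   its (unique) color-i edge.  Multiple edges (different colors) are allowed. *)
Definition adj (q : nat) (V : finType) (s : 'I_q.+1 -> V -> V) : rel V :=
  [rel x y | [exists i, s i x == y]].

Definition colored_graph (q : nat) (V : finType) (s : 'I_q.+1 -> V -> V) : Prop :=
  [/\ (forall i v, s i (s i v) = v),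
      (forall i v, s i v != v)
    & (forall u v, connect (adj s) u v)].

(* Rooted bipartite: the root edge is the color-0 edge {r, s ord0 r}, oriented
   from r; [black] is a proper 2-coloring with the origin r black. *)
Definition rooted_bipartite (q : nat) (V : finType) (s : 'I_q.+1 -> V -> V)
  (r : V) (black : pred V) : Prop :=
  black r /\ (forall i v, black (s i v) = ~~ black v).

(* ---- Constellation S = Psi(G) ----
   White vertex of S = color-0 edge of G, indexed by its black endpoint b.
   The color-i edge at black b goes (oriented) to the white s i b, which lies in
   the color-0 edge with black endpoint s 0 (s i b).  Hence the directed color-i
   cycles after contraction are the cycles of perm_col s i := s 0 o s i on
   black vertices; a color-i vertex of S is (i, O) with O such a cycle
   (as a set of white vertices), joined to each white vertex of O. *)
Definition perm_col (q : nat) (V : finType) (s : 'I_q.+1 -> V -> V) (i : 'I_q.+1)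
  : V -> V := fun v => s ord0 (s i v).

Definition Svert (q : nat) (V : finType) := (V + ('I_q.+1 * {set V}))%type.

Definition S_vertex (q : nat) (V : finType) (s : 'I_q.+1 -> V -> V)
  (black : pred V) (x : Svert q V) : bool :=
  match x with
  | inl b => black b
  | inr iO => (iO.1 != ord0) &&
      [exists b, black b && (iO.2 == [set y | fconnect (perm_col s iO.1) b y])]
  end.

Definition Shat_vertex (q : nat) (V : finType) (s : 'I_q.+1 -> V -> V)
  (black : pred V) (c : 'I_q.+1) (x : Svert q V) : bool :=
  S_vertex s black x &&
  match x with inl _ => true | inr iO => iO.1 != c end.

(* edges of S_{\hat c} (S is a simple graph: each white vertex has exactly one
   edge of each color) *)
Definition Shat_edge (q : nat) (V : finType) (s : 'I_q.+1 -> V -> V)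
  (black : pred V) (c : 'I_q.+1) : rel (Svert q V) :=
  fun x y => [&& Shat_vertex s black c x, Shat_vertex s black c y &
    match x, y with
    | inl b, inr iO => b \in iO.2
    | inr iO, inl b => b \in iO.2
    | _, _ => false
    end].

Definition restrict_rel (T : finType) (e : rel T) (D : {set T}) : rel T :=
  [rel x y | [&& e x y, x \in D & y \in D]].

Definition is_tree (T : finType) (e : rel T) (D : {set T}) : Prop :=
  (forall y z, y \in D -> z \in D -> connect (restrict_rel e D) y z) /\
  ~ (exists p : seq T, [/\ 3 <= size p, uniq p, all (mem D) p & cycle e p]).

(* Vertex labels are taken
   in the ambient type T; only the values of s b on D for b in A matter. *)
Inductive melonic (n : nat) (T : finType) (A : {set 'I_n})
  : {set T} -> ('I_n -> T -> T) -> Prop :=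
| melonic_base (u v : T) (s : 'I_n -> T -> T) :
    2 <= #|A| -> u != v ->
    (forall a, a \in A -> s a u = v /\ s a v = u) ->
    melonic A [set u; v] s
| melonic_insert (D : {set T}) (s s' : 'I_n -> T -> T) (a : 'I_n) (u x y : T) :
    melonic A D s -> a \in A -> u \in D ->
    x \notin D -> y \notin D -> x != y ->
    (forall b, b \in A -> b != a -> s' b x = y /\ s' b y = x) ->
    (* the color-a edge {u, v} (v = s a u) is replaced by {u, x} and {y, v} *)
    s' a u = x -> s' a x = u -> s' a y = s a u -> s' a (s a u) = y ->
    (forall b w, b \in A -> b != a -> w \in D -> s' b w = s b w) ->
    (forall w, w \in D -> w != u -> w != s a u -> s' a w = s a w) ->
    melonic A (x |: (y |: D)) s'.

Definition residue_colors (q : nat) (c : 'I_q.+1) : {set 'I_q.+1} :=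
  [set i : 'I_q.+1 | (i != ord0) && (i != c)].

Definition residue_rel (q : nat) (V : finType) (s : 'I_q.+1 -> V -> V)
  (c : 'I_q.+1) : rel V :=
  [rel x y | [exists i in residue_colors c, s i x == y]].

(* Main.v *)
Require Import Defs.
From mathcomp Require Import all_boot.
From Stdlib Require Import Classical Lia.
From mathcomp Require Import zify.
Set Implicit Arguments. Unset Strict Implicit. Unset Printing Implicit Defensive.


Section Generic.
Variable T : finType.

Lemma conn_closed (e : rel T) (X : pred T) x y :
  X x -> (forall u v, X u -> e u v -> X v) -> connect e x y -> X y.
Proof.
move=> Xx cl /connectP [p pth ->]; elim: p x Xx pth => [|z p IH] x Xx //=.
case/andP=> exz pth; exact: IH (cl _ _ Xx exz) pth.
Qed.

Definition NoCyc (e : rel T) :=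
  ~ (exists p : seq T, [/\ 3 <= size p, uniq p & cycle e p]).

Lemma no_back (e : rel T) (z a y : T) l :
  NoCyc e -> uniq (z :: a :: l) -> path e z (a :: l) -> y \in l -> e y z -> False.
Proof.
move=> nc u pth yl eyz; case/splitPr: yl u pth => l1 l2 u pth; apply: nc.
exists (z :: a :: l1 ++ [:: y]); split.
- by rewrite /= size_cat /= addnS.
- have e1 : z :: a :: l1 ++ y :: l2 = (z :: a :: l1 ++ [:: y]) ++ l2 by rewrite /= -catA.
  by move: u; rewrite e1 cat_uniq => /andP [-> _].
- rewrite /= rcons_cat /=.
  move: pth; rewrite /= !cat_path /= => /and3P [-> -> /andP [-> _]].
  by rewrite eyz.
Qed.

Lemma cycle_leaf (e : rel T) p x u :
  uniq p -> 3 <= size p -> cycle e p -> x \in p ->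
  (forall y, e x y -> y = u) -> (forall y, e y x -> y = u) -> False.
Proof.
move=> up sp cp /rot_to [i s' rq] h1 h2.
have : uniq (x :: s') by rewrite -rq rot_uniq.
have : cycle e (x :: s') by rewrite -rq rot_cycle.
have : 3 <= size (x :: s') by rewrite -rq size_rot.
case: s' {rq} => [|a [|a2 s'']] //= _.
move=> /and3P [exa _]; rewrite rcons_path => /andP [_ el].
case/and4P => _ na _ _.
have ea := h1 _ exa; have el' := h2 _ el.
by move: na; rewrite ea -el' mem_last.
Qed.

Lemma cycle_connect (e : rel T) p x y :
  cycle e p -> x \in p -> y \in p -> connect e x y.
Proof.
move=> cp xp; case/rot_to: xp cp => i s' rq cp yp.
have: cycle e (x :: s') by rewrite -rq rot_cycle.
rewrite /= => pth; apply: (path_connect pth).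
by move: yp; rewrite -(mem_rot i) rq !inE mem_rcons inE => /orP [->|->]; rewrite ?orbT.
Qed.

Lemma fixed_orbit (f : T -> T) b k : f b = b -> fconnect f b k -> k = b.
Proof.
move=> fb h; apply/eqP; apply: (conn_closed (X := pred1 b) _ _ h) => //= u v /eqP -> /eqP <-.
by rewrite fb.
Qed.

(* splicing: g = f with b removed from its cycle; b' is the f-predecessor of b *)
Section Splice.
Variables (B : pred T) (f g : T -> T) (b b' : T).
Hypotheses (finj : injective f) (fB : forall z, B z -> B (f z)) (gB : forall z, B z -> B (g z))
  (fb' : f b' = b) (gb : g b = b) (gb' : g b' = f b)
  (gf : forall z, B z -> z != b -> z != b' -> g z = f z) (bb' : b' != b).

Lemma splice1 x y : B x -> fconnect g x y -> fconnect f x y.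
Proof.
move=> Bx h.
suff: B y && fconnect f x y by case/andP.
apply: (conn_closed (X := [pred z | B z && fconnect f x z]) _ _ h).
  by rewrite /= Bx connect0.
move=> u v /andP [Bu xu] /eqP <-; rewrite /= gB //=.
have [eub|nub] := eqVneq u b; first by rewrite eub gb -eub.
have [eub'|nub'] := eqVneq u b'.
  rewrite eub' gb'; apply: (connect_trans xu); rewrite eub' -fb'.
  apply: (connect_trans (fconnect1 _ _)); exact: fconnect1.
rewrite gf //; apply: (connect_trans xu); exact: fconnect1.
Qed.

Lemma splice0 x : B x -> x != b -> fconnect g x b = false.
Proof.
move=> Bx nxb; apply/negP=> h.
suff: B b && (b != b) by rewrite eqxx andbF.
apply: (conn_closed (X := [pred z | B z && (z != b)]) _ _ h); first by rewrite /= Bx.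
move=> u v /= /andP [Bu nub] /eqP <-; rewrite /= gB //=.
have [eub'|nub'] := eqVneq u b'.
  by rewrite eub' gb'; apply/eqP=> fbb; move/eqP: bb'; apply; apply: finj; rewrite fb' fbb.
by rewrite gf //; apply/eqP=> fub; move: nub'; rewrite -fb' in fub; rewrite (finj fub) eqxx.
Qed.

Lemma splice2 x y : B x -> x != b -> y != b -> fconnect f x y -> fconnect g x y.
Proof.
move=> Bx nxb nyb h.
suff: B y && (fconnect g x y || ((y == b) && fconnect g x b')).
  by rewrite (negbTE nyb) orbF => /andP [].
apply: (conn_closed (X := [pred z | B z && (fconnect g x z || ((z == b) && fconnect g x b'))]) _ _ h).
  by rewrite /= Bx connect0.
move=> u v /= /andP [Bu /orP [xu | /andP [/eqP eub xb']]] /eqP <-; rewrite /= fB //=; last first.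
  by rewrite eub -gb' (connect_trans xb' (fconnect1 _ _)).
have [eub|nub] := eqVneq u b.
  by move: xu; rewrite eub splice0.
have [eub'|nub'] := eqVneq u b'.
  by rewrite eub' fb' eqxx -eub' xu orbT.
by rewrite -gf // (connect_trans xu (fconnect1 _ _)).
Qed.

End Splice.
End Generic.


Lemma melonic_closed n (T : finType) (A : {set 'I_n}) (D : {set T}) (s : 'I_n -> T -> T) :
  melonic A D s -> forall a z, a \in A -> z \in D -> s a z \in D.
Proof.
elim=> {D s}.
- move=> u v s _ _ h a z aA; rewrite !inE => /orP [] /eqP ->; have [h1 h2] := h a aA;
  by rewrite ?h1 ?h2 eqxx ?orbT.
- move=> D s s' a u x y _ IH aA uD xD yD xy hxy su sx sy ssu hb ha b z bA.
  rewrite !inE => /or3P [/eqP ->|/eqP ->|zD].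
  + have [->|ba] := eqVneq b a; first by rewrite sx uD !orbT.
    by have [-> _] := hxy b bA ba; rewrite eqxx orbT.
  + have [->|ba] := eqVneq b a; first by rewrite sy IH ?orbT.
    by have [_ ->] := hxy b bA ba; rewrite eqxx.
  + have [eba|ba] := eqVneq b a; last by rewrite hb // IH ?orbT.
    rewrite eba; have [->|zu] := eqVneq z u; first by rewrite su eqxx.
    have [->|zsu] := eqVneq z (s a u); first by rewrite ssu eqxx orbT.
    by rewrite ha // IH ?orbT // -eba.
Qed.

Lemma melonic_transfer n (T : finType) (A : {set 'I_n}) (D : {set T}) (s t : 'I_n -> T -> T) :
  melonic A D s -> (forall a z, a \in A -> z \in D -> t a z = s a z) -> melonic A D t.
Proof.
case=> {D s}.
- move=> u v s A2 uv h ht; apply: melonic_base => // a aA.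
  by rewrite !ht ?inE ?eqxx ?orbT //; apply: h.
- move=> D s s' a u x y m aA uD xD yD xy hxy su sx sy ssu hb ha ht.
  have inx : x \in x |: (y |: D) by rewrite !inE eqxx.
  have iny : y \in x |: (y |: D) by rewrite !inE eqxx orbT.
  have inD z : z \in D -> z \in x |: (y |: D) by move=> zD; rewrite !inE zD !orbT.
  apply: (melonic_insert (s := s) m aA uD xD yD xy).
  + by move=> b bA ba; rewrite !ht //; apply: hxy.
  + by rewrite ht ?inD.
  + by rewrite ht.
  + by rewrite ht.
  + by rewrite ht ?inD ?(melonic_closed m).
  + by move=> b w bA ba wD; rewrite ht ?inD ?hb.
  + by move=> w wD wu wsu; rewrite ht ?inD ?ha.
Qed.


Lemma exists_max (T : finType) (P : seq T -> Prop) l0 :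
  P l0 -> (forall l, P l -> uniq l) ->
  exists l, P l /\ forall l', P l' -> size l' <= size l.
Proof.
move=> Pl0 Pu.
have bnd l : P l -> size l <= #|T|.
  by move=> Pl; rewrite -(card_uniqP (Pu _ Pl)) max_card.
suff H : forall k l, P l -> #|T| - size l <= k ->
  exists l, P l /\ forall l', P l' -> size l' <= size l by exact: H _ _ Pl0 (leqnn _).
elim=> [|k IH] l Pl hk.
  exists l; split=> // l' Pl'; apply: leq_trans (bnd _ Pl') _.
  by rewrite -subn_eq0 -leqn0.
case: (classic (forall l', P l' -> size l' <= size l)) => [h|]; first by exists l; split.
move=> /not_all_ex_not [l' H]; have [Pl' nle] := imply_to_and _ _ H.
have lt : size l < size l' by rewrite ltnNge; apply/negP.
apply: (IH l' Pl'); have := bnd _ Pl'.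
move: hk lt; move: (size l) (size l') #|T| => m m' N; lia.
Qed.

Section Main.
Variables (q : nat) (V : finType) (black : pred V) (c : 'I_q.+1).
Hypotheses (q3 : 3 <= q) (c0 : c != ord0).

Local Notation A := (residue_colors c).

Lemma A2 : exists i1 i2, [/\ i1 \in A, i2 \in A & i1 != i2].
Proof.
have cA : #|A| = q.-1.
  have -> : A = (setT :\ ord0) :\ c by apply/setP=> i; rewrite !inE andbT andbC.
  have h1 := cardsD1 c (setT :\ ord0); have h2 := cardsD1 ord0 (setT : {set 'I_q.+1}).
  rewrite !inE c0 /= in h1; rewrite !inE cardsT card_ord in h2.
  simpl in h2; move: h1 h2; set X := #|_ :\ ord0|; set Y := #|_ :\ c|; lia.
have : 1 < #|A| by rewrite cA; case: q q3 => [|[|[]]].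
case/card_gt1P => i1 [i2 [h1 h2 h3]]; by exists i1, i2.
Qed.

Lemma A_other j : exists k, k \in A /\ k != j.
Proof.
have [i1 [i2 [h1 h2 h3]]] := A2.
have [e1|n1] := eqVneq i1 j; last by exists i1.
by exists i2; split=> //; rewrite -e1 eq_sym.
Qed.

Lemma inA i : (i \in A) = (i != ord0) && (i != c).
Proof. by rewrite inE. Qed.

Section WithT.
Variable t : 'I_q.+1 -> V -> V.
Hypotheses (tinv : forall i v, t i (t i v) = v) (tnl : forall i v, t i v != v)
  (tbl : forall i v, black (t i v) = ~~ black v).

Local Notation sig i := (perm_col t i).
Local Notation e := (Shat_edge t black c).
Definition orb i b := [set y | fconnect (perm_col t i) b y].
Definition vert i b : Svert q V := inr (i, orb i b).

Lemma sig_inj i : injective (sig i).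
Proof.
apply: (can_inj (g := fun v => t i (t ord0 v))) => v.
by rewrite /perm_col tinv tinv.
Qed.

Lemma sig_black i v : black (sig i v) = black v.
Proof. by rewrite /perm_col !tbl negbK. Qed.

Lemma sig_fix i b : (sig i b == b) = (t i b == t ord0 b).
Proof.
rewrite /perm_col; apply/eqP/eqP=> h; [by rewrite -[in RHS]h tinv | by rewrite h tinv].
Qed.

Lemma orb_sym i x y : fconnect (sig i) x y = fconnect (sig i) y x.
Proof. by apply: fconnect_sym; apply: sig_inj. Qed.

Lemma orb_same i x y : fconnect (sig i) x y -> orb i x = orb i y.
Proof.
move=> h; apply/setP=> z; rewrite !inE; apply/idP/idP=> hz.
  by apply: (connect_trans _ hz); rewrite orb_sym.
exact: connect_trans h hz.
Qed.

Lemma e_sym : symmetric e.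
Proof.
by move=> [x|[i O]] [y|[j P]]; rewrite /Shat_edge //= ?andbF //; rewrite andbCA.
Qed.

Lemma e_irr x : e x x = false.
Proof. by case: x => [x|[i O]]; rewrite /Shat_edge /= !andbF. Qed.

Lemma e_lr b i O : e (inl b) (inr (i, O)) =
  [&& black b, i \in A, [exists b0, black b0 && (O == orb i b0)] & b \in O].
Proof.
rewrite /Shat_edge /Shat_vertex /S_vertex /= inA andbT.
by rewrite /orb; case: (black b); case: (i != ord0); case: (i != c); rewrite /= ?andbT ?andbF.
Qed.

Lemma e_rl b i O : e (inr (i, O)) (inl b) = e (inl b) (inr (i, O)).
Proof. exact: e_sym. Qed.

Lemma e_ll x y : e (inl x) (inl y) = false.
Proof. by rewrite /Shat_edge /= !andbF. Qed.

Lemma e_rr x y : e (inr x) (inr y) = false.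
Proof. by rewrite /Shat_edge; case: x y => [? ?] [? ?]; rewrite /= !andbF. Qed.

Lemma vert_edge k i b : black b -> i \in A -> k \in orb i b -> e (inl k) (vert i b).
Proof.
move=> bb iA kO; rewrite e_lr iA kO andbT /=.
have kb : black k.
  move: kO; rewrite inE => /connectP [p pth ->].
  elim: p b bb pth => [|x p IH] b bb //= /andP [/eqP <- pth]; apply: IH pth.
  by rewrite sig_black.
by rewrite kb; apply/existsP; exists b; rewrite bb eqxx.
Qed.

Lemma edge_orb b i O : e (inl b) (inr (i, O)) -> O = orb i b /\ i \in A.
Proof.
rewrite e_lr => /and4P [_ iA /existsP [b0 /andP [_ /eqP ->]] bO]; split=> //.
by apply: orb_same; rewrite inE in bO.
Qed.

Lemma leaf b i O : sig i b = b -> e (inl b) (inr (i, O)) ->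
  forall y, e (inr (i, O)) y -> y = inl b.
Proof.
move=> fb /edge_orb [-> _] [k|y] //; last by rewrite e_rr.
rewrite e_rl e_lr => /and4P [_ _ _]; rewrite inE => /(fixed_orbit fb) ->.
by [].
Qed.


Lemma find_dipole : NoCyc e ->
  (exists b, black b /\ exists2 i, i \in A & sig i b != b) ->
  exists b j, [/\ black b, j \in A, sig j b != b &
                 forall i, i \in A -> i != j -> sig i b = b].
Proof.
move=> tnc [b0 [bb0 [i0 i0A nfix]]].
have [i' [i'A i'i0]] := A_other i0.
set b1 := sig i0 b0.
have bb1 : black b1 by rewrite sig_black.
have b1O : b1 \in orb i0 b0 by rewrite inE fconnect1.
have e1 : e (inl b0) (vert i0 b0) by apply: vert_edge; rewrite // inE connect0.
have e2 : e (inl b1) (vert i0 b0) by apply: vert_edge.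
have e3 : e (inl b1) (vert i' b1) by apply: vert_edge; rewrite // inE connect0.
pose P (l : seq (Svert q V)) := [&& uniq l, sorted e l & 3 < size l].
have [l [Pl maxl]] : exists l, P l /\ forall l', P l' -> size l' <= size l.
  apply: (exists_max (l0 := [:: inl b0; vert i0 b0; inl b1; vert i' b1])).
    rewrite /P /= e1 e_sym e2 e3 /= !inE !andbT.
    rewrite /vert -[inl b0 == inl b1]/(b0 == b1).
    rewrite -[inr _ == inr _]/((i0, orb i0 b0) == (i', orb i' b1)) xpair_eqE.
    by rewrite (eq_sym b0) (negbTE nfix) (eq_sym i0) (negbTE i'i0).
  by move=> l /and3P [].
case: l maxl Pl => [|z [|a [|h [|k l4]]]] maxl; rewrite /P ?andbF //.
move=> /and3P [ul sl _].
have ext y : y \notin [:: z, a, h, k & l4] -> e y z -> False.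
  move=> yn eyz.
  have hP : P (y :: [:: z, a, h, k & l4]).
    by apply/and3P; split => //; [rewrite cons_uniq yn ul | rewrite /= eyz; exact: sl].
  by have := maxl _ hP; rewrite ltnn.
have st1 y : e z y -> y = a.
  move=> ezy; case: (boolP (y \in [:: z, a, h, k & l4])) => [|yn]; last first.
    by case: (ext y yn); rewrite e_sym.
  rewrite in_cons => /orP [/eqP yz|]; first by move: ezy; rewrite yz e_irr.
  rewrite in_cons => /orP [/eqP //|yl].
  by case: (no_back tnc ul sl yl); rewrite e_sym.
have eza : e z a by case/andP: sl.
have [b [ab bb]] : exists b, a = inl b /\ black b.
  case Ez : z => [b2|[iz Oz]]; rewrite Ez in eza st1.
    case Ea : a eza => [?|[ia Oa]]; first by rewrite e_ll.
    rewrite e_lr => /and4P [bb2 _ _ _]; rewrite -Ea.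
    have [i1 [i2 [h1 h2 h3]]] := A2.
    have m1 : b2 \in orb i1 b2 by rewrite inE connect0.
    have m2 : b2 \in orb i2 b2 by rewrite inE connect0.
    have q1 := st1 _ (vert_edge bb2 h1 m1).
    have q2 := st1 _ (vert_edge bb2 h2 m2).
    by move: h3; rewrite -q2 in q1; case: q1 => ->; rewrite eqxx.
  case Ea : a eza => [b|y]; last by rewrite e_rr.
  by rewrite e_rl e_lr => /and4P [bb _ _ _]; exists b.
subst a.
have st3 i : i \in A -> sig i b != b -> vert i b = h.
  move=> iA nf; apply/eqP/negP=> /negP yh.
  set b2 := sig i b.
  have eyb2 : e (vert i b) (inl b2) by rewrite e_sym; apply: vert_edge; rewrite // inE fconnect1.
  have eby : e (inl b) (vert i b) by apply: vert_edge; rewrite // inE connect0.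
  have [yz|yz] := eqVneq (vert i b) z.
    have ezb2 : e z (inl b2) by rewrite -yz.
    by move: (st1 _ ezb2) => [] /eqP; rewrite (negbTE nf).
  case: (boolP (vert i b \in k :: l4)) => [yl|yl].
    have u2 : uniq [:: inl b, h, k & l4] by case/andP: ul.
    have s2 : path e (inl b) [:: h, k & l4] by case/andP: sl.
    by case: (no_back tnc u2 s2 yl); rewrite e_sym.
  have yn : vert i b \notin [:: z, inl b, h, k & l4].
    by rewrite !in_cons negb_or yz negb_or /vert eq_sym /= negb_or yh yl.
  have u1 : uniq [:: vert i b, inl b, h, k & l4].
    by move: yn ul; rewrite /= !in_cons !negb_or => /and4P [_ -> -> ->] /andP [_ ->].
  have s1 : path e (vert i b) [:: inl b, h, k & l4] by move: sl => /= /andP [_ ->]; rewrite e_sym eby.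
  case: (boolP (inl b2 \in [:: vert i b, inl b, h, k & l4])) => [|b2n].
    rewrite !in_cons /= (inj_eq inl_inj) (negbTE nf) /= => b2l.
    have b2l' : inl b2 \in [:: h, k & l4] by rewrite !in_cons.
    by case: (no_back tnc u1 s1 b2l'); rewrite e_sym.
  have hP : P [:: inl b2, vert i b, inl b, h, k & l4].
    by apply/and3P; split => //; [rewrite cons_uniq b2n u1 | rewrite /= e_sym eyb2; exact: s1].
  by have := maxl _ hP; rewrite ltnn.
have ebh : e (inl b) h by case/andP: sl => _ /andP [].
case: h ebh st3 ul sl maxl ext st1 => [?|[j O]]; first by rewrite e_ll.
move=> ebh st3 ul sl maxl ext st1.
have [Oe jA] := edge_orb ebh.
exists b, j; split=> //.
  apply/negP => /eqP fb.
  have ehk : e (inr (j, O)) k by move: sl => /= /and4P [_ _ -> _].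
  have := leaf fb ebh ehk => kb.
  by move: ul; rewrite /= !in_cons kb eqxx !orbT andbF.
move=> i iA ij; apply/eqP/negP=> /negP nf.
by move: (st3 i iA nf) => [] /eqP; rewrite (negbTE ij).
Qed.

End WithT.
End Main.


Section Res.
Variables (q : nat) (V : finType) (c : 'I_q.+1).
Local Notation A := (residue_colors c).
Variable t : 'I_q.+1 -> V -> V.
Hypothesis (tinv : forall i v, t i (t i v) = v).

Definition R v := [set z | connect (residue_rel t c) v z].

Lemma rr_sym : symmetric (residue_rel t c).
Proof.
move=> x y; apply/existsP/existsP=> [] [i /andP [iA /eqP <-]]; exists i; by rewrite iA tinv eqxx.
Qed.

Lemma rr_step i z : i \in A -> residue_rel t c z (t i z).
Proof. by move=> iA; apply/existsP; exists i; rewrite iA eqxx. Qed.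

Lemma R_in v z i : z \in R v -> i \in A -> t i z \in R v.
Proof.
move=> h iA; move: h; rewrite /R [_ \in _]inE [t i z \in _]inE => h.
by apply: (connect_trans h); apply: connect1; apply: rr_step.
Qed.

Lemma R_v v : v \in R v. Proof. by rewrite inE connect0. Qed.

Lemma R_ind (X : pred V) v : X v -> (forall z i, X z -> i \in A -> X (t i z)) ->
  forall z, z \in R v -> X z.
Proof.
move=> Xv st z; rewrite inE => h.
apply: (conn_closed Xv _ h).
move=> u y Xu /existsP [i /andP [iA /eqP <-]].
exact: st.
Qed.

Lemma R_eq v u : connect (residue_rel t c) v u -> R v = R u.
Proof.
move=> h; apply/setP=> z; rewrite !inE; apply: same_connect => //.
exact: sym_connect_sym rr_sym.
Qed.

Lemma R_conn v z : z \in R v -> connect (residue_rel t c) z v.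
Proof. by rewrite inE (sym_connect_sym rr_sym). Qed.

End Res.

Section Rewire.
Variables (q : nat) (V : finType) (black : pred V) (c : 'I_q.+1).
Hypotheses (q3 : 3 <= q) (c0 : c != ord0).
Local Notation A := (residue_colors c).
Variable t : 'I_q.+1 -> V -> V.
Hypotheses (tinv : forall i v, t i (t i v) = v) (tnl : forall i v, t i v != v)
  (tbl : forall i v, black (t i v) = ~~ black v).
Variables (b : V) (j : 'I_q.+1).
Hypotheses (bb : black b) (jA : j \in A) (nfj : perm_col t j b != b)
  (fixo : forall i, i \in A -> i != j -> perm_col t i b = b).

Definition w := t ord0 b.
Definition w' := t j b.
Definition b' := t j w.
Definition t' (i : 'I_q.+1) (z : V) : V :=
  if i == j then
    (if z == b then w else if z == w then b else if z == b' then w'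
     else if z == w' then b' else t j z)
  else t i z.

Lemma bw_ : black w = false. Proof. by rewrite /w tbl bb. Qed.
Lemma bw'_ : black w' = false. Proof. by rewrite /w' tbl bb. Qed.
Lemma bb'_ : black b' = true. Proof. by rewrite /b' tbl bw_. Qed.
Lemma neq_bw : b != w. Proof. by apply/eqP=> h; move: bw_; rewrite -h bb. Qed.
Lemma neq_bw' : b != w'. Proof. by apply/eqP=> h; move: bw'_; rewrite -h bb. Qed.
Lemma neq_b'w : b' != w. Proof. by apply/eqP=> h; move: bw_; rewrite -h bb'_. Qed.
Lemma neq_b'w' : b' != w'. Proof. by apply/eqP=> h; move: bw'_; rewrite -h bb'_. Qed.
Lemma neq_ww' : w' != w. Proof. by rewrite /w' /w -(sig_fix tinv). Qed.
Lemma neq_bb' : b' != b.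
Proof.
apply/eqP=> h; move/eqP: neq_ww'; apply.
by rewrite /w' -h /b' tinv.
Qed.

Lemma tjb : t j b = w'. Proof. by []. Qed.
Lemma tjw' : t j w' = b. Proof. by rewrite /w' tinv. Qed.
Lemma tjw : t j w = b'. Proof. by []. Qed.
Lemma tjb' : t j b' = w. Proof. by rewrite /b' tinv. Qed.

Lemma t'_other i z : i != j -> t' i z = t i z.
Proof. by rewrite /t' => /negbTE ->. Qed.

Lemma t'_rest z : z != b -> z != w -> z != b' -> z != w' -> t' j z = t j z.
Proof. by rewrite /t' eqxx => /negbTE -> /negbTE -> /negbTE -> /negbTE ->. Qed.

Lemma t'b : t' j b = w. Proof. by rewrite /t' !eqxx. Qed.
Lemma t'w : t' j w = b. Proof. by rewrite /t' eqxx eq_sym (negbTE neq_bw) eqxx. Qed.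
Lemma t'b' : t' j b' = w'.
Proof. by rewrite /t' eqxx (negbTE neq_bb') (negbTE neq_b'w) eqxx. Qed.
Lemma t'w' : t' j w' = b'.
Proof.
by rewrite /t' eqxx eq_sym (negbTE neq_bw') (negbTE neq_ww') eq_sym (negbTE neq_b'w') eqxx.
Qed.

Lemma tj_rest z : z != b -> z != w -> z != b' -> z != w' ->
  [/\ t j z != b, t j z != w, t j z != b' & t j z != w'].
Proof.
move=> h1 h2 h3 h4; split; apply/eqP=> h.
- by move/eqP: h4; apply; rewrite -tjb -h tinv.
- by move/eqP: h3; apply; rewrite /b' -h tinv.
- by move/eqP: h2; apply; rewrite -tjb' -h tinv.
- by move/eqP: h1; apply; rewrite -tjw' -h tinv.
Qed.

Lemma t'inv i z : t' i (t' i z) = z.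
Proof.
have [ij|ij] := eqVneq i j; last by rewrite !t'_other.
rewrite ij.
have [->|h1] := eqVneq z b; first by rewrite t'b t'w.
have [->|h2] := eqVneq z w; first by rewrite t'w t'b.
have [->|h3] := eqVneq z b'; first by rewrite t'b' t'w'.
have [->|h4] := eqVneq z w'; first by rewrite t'w' t'b'.
have [k1 k2 k3 k4] := tj_rest h1 h2 h3 h4.
by rewrite t'_rest // t'_rest // tinv.
Qed.

Lemma t'bl i z : black (t' i z) = ~~ black z.
Proof.
have [ij|ij] := eqVneq i j; last by rewrite !t'_other.
rewrite ij.
have [->|h1] := eqVneq z b; first by rewrite t'b bw_ bb.
have [->|h2] := eqVneq z w; first by rewrite t'w bw_ bb.
have [->|h3] := eqVneq z b'; first by rewrite t'b' bw'_ bb'_.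
have [->|h4] := eqVneq z w'; first by rewrite t'w' bw'_ bb'_.
by rewrite t'_rest.
Qed.

Lemma t'nl i z : t' i z != z.
Proof.
apply/eqP=> h; have := t'bl i z; rewrite h.
by case: (black z).
Qed.

Lemma j0 : ord0 != j.
Proof. by move: jA; rewrite inE => /andP [h _]; rewrite eq_sym. Qed.

Lemma t'_fixb i : i \in A -> perm_col t' i b = b.
Proof.
move=> iA; have [ij|ij] := eqVneq i j.
  by rewrite ij /perm_col t'b t'_other ?j0 // /w tinv.
rewrite /perm_col !t'_other ?j0 //; exact: fixo.
Qed.


Lemma sig_other i : i != j -> perm_col t' i =1 perm_col t i.
Proof. by move=> ij z; rewrite /perm_col !t'_other ?j0. Qed.

Lemma t'0 z : t' ord0 z = t ord0 z.
Proof. by rewrite t'_other ?j0. Qed.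

Lemma sfb' : perm_col t j b' = b. Proof. by rewrite /perm_col tjb' /w tinv. Qed.
Lemma sgb' : perm_col t' j b' = perm_col t j b. Proof. by rewrite /perm_col t'b' t'0. Qed.
Lemma sgf z : black z -> z != b -> z != b' -> perm_col t' j z = perm_col t j z.
Proof.
move=> bz h1 h3; rewrite /perm_col t'0 t'_rest //.
  by apply/eqP=> h; move: bz; rewrite h bw_.
by apply/eqP=> h; move: bz; rewrite h bw'_.
Qed.

Lemma orb_j b0 y : black b0 -> b0 != b ->
  (y \in orb t j b0) = (y \in orb t' j b0) || ((y == b) && (b' \in orb t' j b0)).
Proof.
move=> bb0 nb0.
have finj := sig_inj tinv (i := j).
have fB z : black z -> black (perm_col t j z) by rewrite sig_black.
have gB z : black z -> black (perm_col t' j z) by rewrite (sig_black t'bl).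
have gb := t'_fixb jA.
rewrite /orb !inE.
have [->|yb] := eqVneq y b; last first.
  rewrite orbF; apply/idP/idP.
    exact: (splice2 finj fB gB sfb' sgb' sgf neq_bb').
  exact: (splice1 gB sfb' gb sgb' sgf).
rewrite (splice0 finj gB sfb' sgb' sgf neq_bb') //=.
have bb'c : fconnect (perm_col t j) b' b by rewrite -sfb' fconnect1.
apply/idP/idP=> h.
  apply: (splice2 finj fB gB sfb' sgb' sgf neq_bb') => //; first exact: neq_bb'.
  by apply: (connect_trans h); rewrite (orb_sym tinv).
apply: (connect_trans _ bb'c); exact: (splice1 gB sfb' gb sgb' sgf).
Qed.


Definition fS (x : Svert q V) : Svert q V :=
  match x with
  | inl z => inl z
  | inr iO => inr (iO.1, if (iO.1 == j) && (b' \in iO.2) then b |: iO.2 else iO.2)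
  end.

Definition good (x : Svert q V) : bool :=
  match x with inl z => z != b | inr iO => b \notin iO.2 end.

Lemma setD1_if (cond : bool) (O : {set V}) : b \notin O ->
  (if cond then b |: O else O) :\ b = O.
Proof.
move=> nbO; apply/setP=> y; rewrite !inE; case: cond; rewrite ?inE;
  have [->|] := eqVneq y b; rewrite ?(negbTE nbO) //.
Qed.

Lemma edge_core z i (O : {set V}) : z != b -> b \notin O ->
  Shat_edge t' black c (inl z) (inr (i, O)) ->
  Shat_edge t black c (inl z) (fS (inr (i, O))).
Proof.
move=> nzb nbO; rewrite /fS /= !e_lr => /and4P [bz iA /existsP [b0 /andP [bb0 /eqP Oe]] zO].
rewrite bz iA /=; apply/andP; split; last by case: ifP => _; rewrite ?inE zO ?orbT.
apply/existsP; exists b0; rewrite bb0 /=; apply/eqP.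
have [ij|ij] := eqVneq i j; last first.
  rewrite /= Oe; apply/setP=> y; rewrite /orb !inE.
  exact: eq_fconnect (sig_other ij) _ _.
rewrite /=; rewrite ij in Oe *.
have b0O : b0 \in O by rewrite Oe /orb inE connect0.
have nb0 : b0 != b by apply/eqP=> h; move: nbO; rewrite -h b0O.
apply/setP=> y; rewrite (orb_j y bb0 nb0) -Oe.
case: ifP => h; rewrite ?inE ?h ?andbT ?andbF ?orbF //.
by rewrite orbC.
Qed.

Lemma nocyc_t' : NoCyc (Shat_edge t black c) -> NoCyc (Shat_edge t' black c).
Proof.
move=> nc [p [sp up cp]]; apply: nc.
set e' := Shat_edge t' black c.
have leafr i (O : {set V}) : b \in O -> inr (i, O) \in p -> False.
  move=> bO ip.
  have := next_cycle cp ip; case: (next p (inr (i, O))) => [k|y]; last by rewrite /e' e_rr.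
  rewrite /e' e_rl e_lr => /and4P [bk iA ex kO].
  have ebi : e' (inl b) (inr (i, O)) by rewrite /e' e_lr bb iA ex bO.
  have lf := leaf t'inv (t'_fixb iA) ebi.
  apply: (cycle_leaf up sp cp ip lf) => y hy; apply: lf; by rewrite /e' e_sym.
have goodp x : x \in p -> good x.
  case: x => [z|[i O]] xp /=; last by apply/negP=> bO; exact: leafr bO xp.
  apply/negP=> /eqP zb; move: xp; rewrite zb => xp.
  have := next_cycle cp xp; have := mem_next p (inl b); rewrite xp.
  case: (next p (inl b)) => [k|[i O]] ip; first by rewrite /e' e_ll.
  by rewrite /e' e_lr => /and4P [_ _ _ bO]; exact: leafr bO ip.
exists (map fS p); split.
- by rewrite size_map.
- rewrite map_inj_in_uniq // => x y xp yp.
  have gx := goodp _ xp; have gy := goodp _ yp.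
  case: x y gx gy {xp yp} => [x|[i O]] [y|[i2 O2]] /= gx gy; case=> //; first by move=> ->.
  move=> <- e2; congr (inr (_, _)).
  by rewrite -(setD1_if ((i == j) && (b' \in O)) gx) e2 setD1_if.
- rewrite cycle_map; apply: (sub_in_cycle (P := [pred x | good x])) cp; last first.
    by apply/allP=> x /goodp.
  move=> x y; rewrite !inE /relpre.
  case: x y => [x|[i O]] [y|[i2 O2]] /= gx gy.
  + by rewrite /e' e_ll.
  + exact: edge_core.
  + rewrite /e' e_rl => h; rewrite e_sym; exact: edge_core.
  + by rewrite /e' e_rr.
Qed.


Lemma tAb i : i \in A -> i != j -> t i b = w.
Proof. by move=> iA ij; apply/eqP; rewrite -(sig_fix tinv) fixo. Qed.

Lemma t'Ab i : i \in A -> t' i b = w.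
Proof. move=> iA; have [->|ij] := eqVneq i j; [exact: t'b | by rewrite t'_other // tAb]. Qed.

Lemma t'Aw i : i \in A -> t' i w = b.
Proof. by move=> iA; rewrite -(t'Ab iA) t'inv. Qed.

Lemma notin_bw z : z \in R c t' w' -> (z != b) && (z != w).
Proof.
apply: (R_ind (X := [pred z | (z != b) && (z != w)])).
  by rewrite /= eq_sym neq_bw' neq_ww'.
move=> u i /andP [ub uw] iA /=; apply/andP; split; apply/eqP=> h.
  by move/eqP: uw; apply; rewrite -(t'Ab iA) -h t'inv.
by move/eqP: ub; apply; rewrite -(t'Aw iA) -h t'inv.
Qed.

Lemma R_b : R c t b = b |: (w |: R c t' w').
Proof.
have w'R : w' \in R c t' w' by exact: R_v.
have b'R : b' \in R c t' w' by rewrite -t'w'; apply: R_in.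
have [k [kA kj]] := A_other q3 c0 j.
have wRb : w \in R c t b by rewrite -(tAb kA kj); apply: R_in; rewrite ?R_v.
apply/setP=> z; apply/idP/idP.
  apply: (R_ind (X := [pred z | z \in b |: (w |: R c t' w')])); first by rewrite /= !in_setU1 eqxx.
  move=> u i hu iA; rewrite /= !in_setU1 in hu *.
  have [ij|ij] := eqVneq i j; last first.
    case/or3P: hu => [/eqP ->|/eqP ->|uR].
    - by rewrite tAb // eqxx orbT.
    - by rewrite -(tAb iA ij) tinv eqxx.
    - by move: (notin_bw uR) => /andP [ub uw]; rewrite -t'_other // (R_in uR) ?orbT.
  rewrite ij; case/or3P: hu => [/eqP ->|/eqP ->|uR].
  - by rewrite tjb w'R !orbT.
  - by rewrite tjw b'R !orbT.
  - move: (notin_bw uR) => /andP [ub uw].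
    have [->|ub'] := eqVneq u b'; first by rewrite tjb' eqxx orbT.
    have [->|uw'] := eqVneq u w'; first by rewrite tjw' eqxx.
    by rewrite -t'_rest // (R_in uR) ?orbT.
rewrite !in_setU1 => /or3P [/eqP ->|/eqP ->|]; [exact: R_v | exact: wRb|].
apply: (R_ind (X := [pred z | z \in R c t b])); first by rewrite /= -tjb; apply: R_in; rewrite ?R_v.
move=> u i /= uR iA.
have [ij|ij] := eqVneq i j; last by rewrite t'_other // R_in.
rewrite ij.
have [->|ub] := eqVneq u b; first by rewrite t'b.
have [->|uw] := eqVneq u w; first by rewrite t'w R_v.
have [->|ub'] := eqVneq u b'; first by rewrite t'b' -tjb R_in ?R_v.
have [->|uw'] := eqVneq u w'; first by rewrite t'w' -tjw R_in.
by rewrite t'_rest // R_in.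
Qed.

Lemma R_other v : ~~ connect (residue_rel t c) v b ->
  R c t v = R c t' v /\
  forall z, z \in R c t v -> [&& z != b, z != w, z != b' & z != w'].
Proof.
move=> nvb.
have avoid z : z \in R c t v -> [&& z != b, z != w, z != b' & z != w'].
  move=> zR; apply/and4P; split; apply/negP=> /eqP ez; move/negP: nvb; apply;
    rewrite inE in zR; apply: (connect_trans zR); apply: (R_conn tinv).
  - by rewrite ez R_b !in_setU1 eqxx.
  - by rewrite ez R_b !in_setU1 eqxx orbT.
  - by rewrite ez R_b !in_setU1 -t'w' (R_in (R_v c t' w') jA) !orbT.
  - by rewrite ez R_b !in_setU1 (R_v c t' w') !orbT.
have sub1 : forall z, z \in R c t' v -> z \in R c t v.
  apply: (R_ind (X := [pred z | z \in R c t v])); first by rewrite /= R_v.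
  move=> u i /= uR iA; have /and4P [h1 h2 h3 h4] := avoid _ uR.
  have [ij|ij] := eqVneq i j; last by rewrite t'_other // R_in.
  by rewrite ij t'_rest // -ij R_in.
split=> //; apply/setP=> z; apply/idP/idP; last exact: sub1.
apply: (R_ind (X := [pred z | z \in R c t' v])); first by rewrite /= R_v.
move=> u i /= uR iA; have /and4P [h1 h2 h3 h4] := avoid _ (sub1 _ uR).
have [ij|ij] := eqVneq i j; last by rewrite -t'_other // R_in.
by rewrite ij -t'_rest // -ij R_in.
Qed.

Lemma melonic_step : (forall v, melonic A (R c t' v) t') -> forall v, melonic A (R c t v) t.
Proof.
move=> IH v.
case: (boolP (connect (residue_rel t c) v b)) => [vb|nvb].
  rewrite (R_eq tinv vb) R_b.
  have [nb nw] : b \notin R c t' w' /\ w \notin R c t' w'.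
    by split; apply/negP=> /notin_bw; rewrite eqxx ?andbF.
  apply: (melonic_insert (IH w') jA (R_v _ _ _) nb nw neq_bw).
  - move=> k kA kj; split; first exact: tAb.
    by rewrite -(tAb kA kj) tinv.
  - exact: tjw'.
  - exact: tjb.
  - by rewrite t'w' tjw.
  - by rewrite t'w' tjb'.
  - by move=> k z kA kj _; rewrite t'_other.
  - move=> z /notin_bw /andP [zb zw] zw'; rewrite t'w' => zb'.
    by rewrite t'_rest.
have [eR avoid] := R_other nvb; rewrite eR.
apply: (melonic_transfer (IH v)) => a z aA zR.
have /and4P [h1 h2 h3 h4] : [&& z != b, z != w, z != b' & z != w'].
  by apply: avoid; rewrite eR.
have [aj|aj] := eqVneq a j; last by rewrite t'_other.
by rewrite aj t'_rest.
Qed.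

Definition M (u : 'I_q.+1 -> V -> V) :=
  #|[set z | black z && [exists i in A, perm_col u i z != z]]|.

Lemma M_lt : M t' < M t.
Proof.
rewrite /M; set X := [set z | _ && _]; set Y := [set z | _ && _].
have bY : b \in Y by rewrite inE bb /=; apply/existsP; exists j; rewrite jA nfj.
have sub : X \subset Y :\ b.
  apply/subsetP=> z; rewrite !inE => /andP [bz /existsP [i /andP [iA nf]]].
  have zb : z != b by apply/eqP=> e; move: nf; rewrite e t'_fixb // eqxx.
  rewrite zb bz /=; apply/existsP.
  have [ij|ij] := eqVneq i j; last by exists i; rewrite iA -(sig_other ij).
  exists j; rewrite jA /=.
  have [->|zb'] := eqVneq z b'; first by rewrite sfb' eq_sym neq_bb'.
  by rewrite -sgf // -ij.
have := subset_leq_card sub; rewrite (cardsD1 b Y) bY add1n => h.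
exact: leq_ltn_trans h (leqnn _).
Qed.

End Rewire.


Section Final.
Variables (q : nat) (V : finType) (black : pred V) (c : 'I_q.+1).
Hypotheses (q3 : 3 <= q) (c0 : c != ord0).
Local Notation A := (residue_colors c).

Lemma base_case (t : 'I_q.+1 -> V -> V) :
  (forall i v, t i (t i v) = v) -> (forall i v, t i v != v) ->
  (forall i v, black (t i v) = ~~ black v) ->
  (forall z, black z -> forall i, i \in A -> perm_col t i z = z) ->
  forall v, melonic A (R c t v) t.
Proof.
move=> tinv tnl tbl fx v.
have key a : a \in A -> t a v = t ord0 v /\ t a (t ord0 v) = v.
  move=> aA; case: (boolP (black v)) => bv.
    have h : t a v = t ord0 v by apply/eqP; rewrite -(sig_fix tinv) fx.
    by rewrite -h tinv.
  have bz : black (t ord0 v) by rewrite tbl bv.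
  have h : t a (t ord0 v) = v by apply/eqP; rewrite -[v in _ == v](tinv ord0) -(sig_fix tinv) fx.
  by rewrite -h tinv h.
have [i1 [i2 [h1 h2 h3]]] := A2 q3 c0.
have -> : R c t v = [set v; t ord0 v].
  apply/setP=> z; apply/idP/idP.
    apply: (R_ind (X := [pred z | z \in [set v; t ord0 v]])); first by rewrite /= !inE eqxx.
    move=> u i hu iA; move: hu; rewrite /= !inE => /orP [] /eqP ->.
      by rewrite (key i iA).1 eqxx orbT.
    by rewrite (key i iA).2 eqxx.
  rewrite in_set2 => /orP [] /eqP ->; first exact: R_v.
  by rewrite -(key i1 h1).1; apply: R_in; rewrite ?R_v.
apply: melonic_base.
- by apply/card_gt1P; exists i1, i2.
- by rewrite eq_sym tnl.
- exact: key.
Qed.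

Lemma main_ind n : forall t : 'I_q.+1 -> V -> V,
  (forall i v, t i (t i v) = v) -> (forall i v, t i v != v) ->
  (forall i v, black (t i v) = ~~ black v) ->
  NoCyc (Shat_edge t black c) -> M black c t <= n ->
  forall v, melonic A (R c t v) t.
Proof.
elim: n => [|n IH] t tinv tnl tbl nc hM.
  apply: base_case => // z bz i iA; apply/eqP; apply/negPn/negP=> nf.
  move: hM; rewrite leqn0 => /eqP /cards0_eq /setP /(_ z); rewrite !inE bz /= => /existsP; apply.
  by exists i; rewrite iA nf.
case: (boolP [exists z, black z && [exists i in A, perm_col t i z != z]]) => [ex|nex]; last first.
  apply: base_case => // z bz i iA; apply/eqP; apply/negPn/negP=> nf.
  by move/existsP: nex; apply; exists z; rewrite bz; apply/existsP; exists i; rewrite iA nf.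
have [b [j [bb jA nfj fixo]]] : exists b j, [/\ black b, j \in A, perm_col t j b != b &
                 forall i, i \in A -> i != j -> perm_col t i b = b].
  apply: (find_dipole q3 c0 tinv tbl nc).
  case/existsP: ex => z /andP [bz /existsP [i /andP [iA nf]]].
  by exists z; split=> //; exists i.
apply: (melonic_step q3 c0 tinv tbl bb jA nfj fixo).
apply: IH.
- exact: t'inv.
- exact: t'nl.
- exact: t'bl.
- exact: nocyc_t'.
- have := M_lt tinv tbl bb jA nfj fixo; move: hM; lia.
Qed.

End Final.


Theorem mainTheorem14 (q : nat) (V : finType) (s : 'I_q.+1 -> V -> V)
  (r : V) (black : pred V) (c : 'I_q.+1) :
  3 <= q ->
  colored_graph s ->
  rooted_bipartite s r black ->
  c != ord0 ->
  (forall x : Svert q V, Shat_vertex s black c x ->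
     is_tree (Shat_edge s black c) [set y | connect (Shat_edge s black c) x y]) ->
  forall v : V,
    melonic (residue_colors c) [set w | connect (residue_rel s c) v w] s.
Proof.
move=> q3 [sinv snl _] [_ sbl] c0 htree v.
have nc : NoCyc (Shat_edge s black c).
  move=> [p [sp up cp]].
  case: p sp up cp => [|x p'] // sp up cp.
  have xp : x \in x :: p' by rewrite mem_head.
  have sv : Shat_vertex s black c x.
    by have := next_cycle cp xp; rewrite /Shat_edge => /andP [].
  apply: (htree x sv).2; exists (x :: p'); split => //.
  apply/allP=> y yp; rewrite /= !inE; exact: cycle_connect cp xp yp.
exact: (main_ind q3 c0 sinv snl sbl nc (leqnn _) v).
Qed.
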